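(* If $Z_1,\dots,Z_S$ are i.i.d. $\mathcal N(0,1)$ random variables, then for every $\varepsilon\in(0,1)$, $$\mathrm P\left[\left|\frac1S\sum_{s=1}^S Z_s^2-1-\left(\frac1S\sum_{s=1}^S Z_s\right)^2\right|\ge\varepsilon\right]\le 3\exp\left\{\frac{-S\varepsilon^2}{25}\right\}.$$ *)

(* Defs.v *)
From HB Require Import structures.
From mathcomp Require Import all_boot all_order all_algebra.
From mathcomp Require Import all_classical all_reals all_analysis.
Set Implicit Arguments. Unset Strict Implicit. Unset Printing Implicit Defensive.
Import Order.TTheory GRing.Theory Num.Theory.
Local Open Scope classical_set_scope.
Local Open Scope ring_scope.

(* Mutual independence of a finite family of real random variables:
   for every family of Borel sets (B i)_i, the joint probability factorizes.
   Taking B i = setT for some i covers all subfamilies. *)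
Definition mutually_independent_RVs {d} {T : measurableType d} {R : realType}
  (P : probability T R) (n : nat) (Z : 'I_n -> {RV P >-> R}) : Prop :=
  forall B : 'I_n -> set R, (forall i, measurable (B i)) ->
    P (\bigcap_(i in [set: 'I_n]) (Z i @^-1` B i)) =
    (\prod_(i < n) fine (P (Z i @^-1` B i)))%:E.

Definition has_normal_law {d} {T : measurableType d} {R : realType}
  (P : probability T R) (X : {RV P >-> R}) (m s : R) : Prop :=
  forall A : set R, measurable A -> distribution P X A = normal_prob m s A.
Arguments mutually_independent_RVs {d T R} P {n} Z.
Arguments has_normal_law {d T R} P X m s.

(* Main.v *)
Require Import Defs.
From HB Require Import structures.
From mathcomp Require Import all_boot all_order all_algebra.
From mathcomp Require Import all_classical all_reals all_analysis.
From mathcomp Require Import measurable_realfun.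
From mathcomp Require Import ring lra zify.
Import Order.TTheory GRing.Theory Num.Theory.
Local Open Scope classical_set_scope.
Local Open Scope ring_scope.

Section transfer.
Local Open Scope ereal_scope.
Context d1 d2 (X : measurableType d1) (Y : measurableType d2) (R : realType).
Variables (mu : {measure set X -> \bar R}) (nu : {measure set Y -> \bar R}).
Variables (phi : X -> Y) (mphi : measurable_fun setT phi).
Variables (G : X -> R) (mG : measurable_fun setT G) (G0 : forall x, (0 <= G x)%R).
Variables (c : R) (c0 : (0 <= c)%R).
Hypothesis hB : forall B, measurable B ->
  \int[mu]_x (\1_B (phi x) * G x)%:E = c%:E * nu B.

Import HBNNSimple.

Lemma transfer (f : Y -> R) : measurable_fun setT f -> (forall y, (0 <= f y)%R) ->
  \int[mu]_x (f (phi x) * G x)%:E = c%:E * \int[nu]_y (f y)%:E.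
Proof.
move=> mf f0.
have mEf : measurable_fun [set: Y] (EFin \o f) by exact/measurable_EFinP.
pose f_ := nnsfun_approx measurableT mEf.
have cvgf y : (EFin \o f_^~ y) @ \oo --> (f y)%:E.
  by apply: cvg_nnsfun_approx => // *; rewrite lee_fin.
have ndf y : nondecreasing_seq (f_^~ y).
  by move=> m n mn; exact/lefP/nd_nnsfun_approx.
have mfphi n : measurable_fun setT (f_ n \o phi).
  exact: measurableT_comp.
rewrite -ge0_integralZl//; try (by move=> y _; rewrite lee_fin); try (exact/measurable_EFinP); try (by rewrite lee_fin).
transitivity (limn (fun n => \int[mu]_x (f_ n (phi x) * G x)%:E)).
  rewrite -monotone_convergence//.
  - apply: eq_integral => x _; apply/esym/cvg_lim => //.
    rewrite EFinM; under eq_fun do rewrite EFinM.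
    by apply: cvgeZr => //; exact: (cvgf (phi x)).
  - by move=> n; apply/measurable_EFinP; apply: measurable_funM => //; exact: (mfphi n).
  - by move=> n x _; rewrite lee_fin mulr_ge0.
  - by move=> x _ a b ab; rewrite lee_fin ler_wpM2r// ndf.
transitivity (limn (fun n => \int[nu]_y (c * f_ n y)%:E)); last first.
  rewrite -monotone_convergence//.
  - apply: eq_integral => y _; apply/cvg_lim => //.
    under eq_fun do rewrite EFinM.
    by apply: cvgeZl => //; exact: (cvgf y).
  - move=> n; apply/measurable_EFinP; apply: measurable_funM => //.
  - by move=> n x _; rewrite lee_fin mulr_ge0.
  - by move=> x _ a b ab; rewrite lee_fin ler_wpM2l// ndf.
apply: (congr1 (fun u : nat -> \bar R => limn u)); apply/funext => n.
have ind0 k y : (0 <= k * \1_(f_ n @^-1` [set k]) y)%R.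
  rewrite indicE; case: (boolP (y \in _)) => [/set_mem <-|_].
    by rewrite mulr1.
  by rewrite mulr0.
have fE y : f_ n y = (\sum_(r \in range (f_ n)) (r * \1_(f_ n @^-1` [set r]) y))%R.
  by rewrite {1}fimfunE.
have mA r : measurable (f_ n @^-1` [set r]).
  by rewrite -[_ @^-1` _]setTI; exact: measurable_funP.
under eq_integral do rewrite fE mulr_fsuml -fsumEFin//.
under [RHS]eq_integral do rewrite fE mulr_fsumr -fsumEFin//.
have mI1 r : measurable_fun setT (fun x => (r * \1_(f_ n @^-1` [set r]) (phi x) * G x)%:E).
  apply/measurable_EFinP; apply: measurable_funM => //; apply: measurable_funM => //.
  by apply: measurableT_comp => //; try exact: measurable_indic.
have mI2 r : measurable_fun setT (fun x => (c * (r * \1_(f_ n @^-1` [set r]) x))%:E).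
  apply/measurable_EFinP; apply: measurable_funM => //; apply: measurable_funM => //.
rewrite ge0_integral_fsum//; last by move=> r x _; rewrite lee_fin mulr_ge0.
rewrite ge0_integral_fsum//; last by move=> r x _; rewrite lee_fin mulr_ge0.
apply: eq_fsbigr => r _.
have [r0|r0] := leP 0%R r; last first.
  rewrite preimage_nnfun0//.
  under eq_integral do rewrite indic0 mulr0 mul0r.
  under [RHS]eq_integral do rewrite indic0 mulr0 mulr0.
  by rewrite !integral0.
under eq_integral do rewrite -mulrA EFinM.
rewrite ge0_integralZl//; try by [move=> x _; rewrite lee_fin mulr_ge0]; try by [rewrite lee_fin mulr_ge0];
  try by [apply/measurable_EFinP; apply: measurable_funM => //; apply: measurableT_comp => //].
under [RHS]eq_integral do rewrite mulrA EFinM.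
rewrite ge0_integralZl//; try by [move=> x _; rewrite lee_fin]; try by [rewrite lee_fin mulr_ge0];
  try by [apply/measurable_EFinP].
rewrite hB// integral_indic// setIT.
by rewrite EFinM muleA [r%:E * _]muleC.
Qed.

End transfer.

Section product.
Local Open Scope ereal_scope.
Context d (T : measurableType d) (R : realType) (P : probability T R).
Variables (n : nat) (Z : 'I_n -> {RV P >-> R}).

Definition Fk (k : nat) (f : 'I_n -> R -> R) (B : 'I_n -> set R) (i : 'I_n) : R -> R :=
  if (i < k)%N then f i else \1_(B i).

Lemma mpre (X : {RV P >-> R}) (B : set R) : measurable B -> measurable (X @^-1` B).
Proof. by move=> mB; rewrite -[X @^-1` B]setTI; exact: measurable_funP. Qed.

Lemma indic_int_fin (X : {RV P >-> R}) (B : set R) : measurable B ->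
  \int[distribution P X]_x (\1_B x)%:E = (fine (P (X @^-1` B)))%:E.
Proof.
move=> mB; rewrite integral_indic// setIT /= /pushforward fineK//.
rewrite ge0_fin_numE//; apply: (le_lt_trans (probability_le1 _ _)) => //.
  exact: mpre.
by rewrite ltry.
Qed.

Hypothesis hind : mutually_independent_RVs P Z.

Lemma prod_indic (B : 'I_n -> set R) w :
  (\prod_(i < n) (\1_(B i) (Z i w) : R))%R = \1_(\bigcap_(i in [set: 'I_n]) (Z i @^-1` B i)) w.
Proof.
rewrite indicE; case: (boolP (w \in _)) => [/set_mem Hw|/negP Hw].
  apply: big1 => i _; rewrite indicE mem_set//; exact: Hw.
have [i Hi] : exists i, ~ B i (Z i w).
  by apply/existsNP => H; apply: Hw; apply/mem_set => i _; exact: H.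
by rewrite (bigD1 i)//= indicE memNset// mul0r.
Qed.

Lemma claim_base (B : 'I_n -> set R) : (forall i, measurable (B i)) ->
  \int[P]_w (\prod_i \1_(B i) (Z i w))%:E =
  (\prod_i fine (\int[distribution P (Z i)]_x (\1_(B i) x)%:E))%:E.
Proof.
move=> mB.
under eq_integral do rewrite prod_indic.
rewrite integral_indic//; last first.
  apply: fin_bigcap_measurable => // i _; exact: mpre.
rewrite setIT; apply: eq_trans (hind B mB) _.
congr EFin; apply: eq_bigr => i _.
by rewrite indic_int_fin.
Qed.

Lemma finP (X : {RV P >-> R}) (B : set R) : measurable B ->
  P (X @^-1` B) \is a fin_num.
Proof.
move=> mB; rewrite ge0_fin_numE//; apply: (le_lt_trans (probability_le1 _ _)) => //.
  exact: mpre.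
by rewrite ltry.
Qed.

Lemma claim k (f : 'I_n -> R -> R) (mf : forall i, measurable_fun setT (f i))
  (f0 : forall i x, (0 <= f i x)%R)
  (fint : forall i, \int[distribution P (Z i)]_x (f i x)%:E < +oo)
  (B : 'I_n -> set R) (mB : forall i, measurable (B i)) :
  \int[P]_w (\prod_i Fk k f B i (Z i w))%:E =
  (\prod_i fine (\int[distribution P (Z i)]_x (Fk k f B i x)%:E))%:E.
Proof.
elim: k B mB => [|k IH] B mB.
  have -> : Fk 0 f B = fun i => \1_(B i) by apply/funext => i; rewrite /Fk ltn0.
  exact: claim_base.
have [kn|nk] := ltnP k n; last first.
  have -> : Fk k.+1 f B = Fk k f B.
    apply/funext => i; rewrite /Fk.
    have h1 : (i < k)%N by have := ltn_ord i; lia.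
    have h2 : (i < k.+1)%N by have := ltn_ord i; lia.
    by rewrite h1 h2.
  exact: IH.
pose k0 : 'I_n := Ordinal kn.
pose Fp := Fk k f B.
have mFp i : measurable_fun setT (Fp i).
  by rewrite /Fp /Fk; case: ifP => _ //; exact: measurable_indic.
have Fp0 : forall i x, (0 <= Fp i x)%R.
  move=> i x; rewrite /Fp /Fk; case: ifP => _; first exact: f0.
  by rewrite indicE; case: (x \in B i).
pose G w := (\prod_(i < n | i != k0) Fp i (Z i w))%R.
pose c := (\prod_(i < n | i != k0) fine (\int[distribution P (Z i)]_x (Fp i x)%:E))%R.
have mG : measurable_fun setT G.
  rewrite /G; under eq_fun do rewrite big_mkcond.
  apply: measurable_prod => i _.
  case: (i != k0) => //.
  apply: measurableT_comp => //.
have G0 w : (0 <= G w)%R by apply: prodr_ge0 => i _.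
have c0 : (0 <= c)%R.
  apply: prodr_ge0 => i _; apply: fine_ge0; apply: integral_ge0 => x _.
  by rewrite lee_fin.
have hC : forall C, measurable C ->
    \int[P]_w (\1_C (Z k0 w) * G w)%:E = c%:E * distribution P (Z k0) C.
  move=> C mC.
  pose B' := fun i => if i == k0 then C else B i.
  have mB' i : measurable (B' i) by rewrite /B'; case: ifP.
  have FkB' i : i != k0 -> Fk k f B' i = Fp i.
    by move=> h; rewrite /Fk /Fp /B' (negbTE h).
  have FkB'0 : Fk k f B' k0 = \1_C by rewrite /Fk /B' /= ltnn eqxx.
  have E1 w : (\prod_i Fk k f B' i (Z i w) = \1_C (Z k0 w) * G w)%R.
    rewrite (bigD1 k0)//= FkB'0; congr (_ * _)%R.
    by apply: eq_bigr => i /FkB' ->.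
  have E2 : (\prod_i fine (\int[distribution P (Z i)]_x (Fk k f B' i x)%:E) =
      fine (\int[distribution P (Z k0)]_x (\1_C x)%:E) * c)%R.
    rewrite (bigD1 k0)//= FkB'0; congr (_ * _)%R.
    by apply: eq_bigr => i /FkB' ->.
  have := IH B' mB'.
  under eq_integral do rewrite E1.
  rewrite E2 => ->.
  rewrite indic_int_fin//= EFinM fineK ?finP// muleC.
  by [].
have mphi : measurable_fun setT (Z k0) by [].
have := @transfer _ _ _ _ _ P (distribution P (Z k0)) (Z k0) mphi G mG G0 c c0 hC
  (f k0) (mf k0) (f0 k0) => HT.
have Fk1 i : i != k0 -> Fk k.+1 f B i = Fp i.
  move=> h; rewrite /Fk /Fp.
  have h' : (i : nat) != k by apply: contra h => /eqP h'; apply/eqP/val_inj.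
  have -> : (i < k.+1)%N = (i < k)%N by lia.
  by [].
have Fk10 : Fk k.+1 f B k0 = f k0 by rewrite /Fk /= ltnSn.
have E1 w : (\prod_i Fk k.+1 f B i (Z i w) = f k0 (Z k0 w) * G w)%R.
  rewrite (bigD1 k0)//= Fk10; congr (_ * _)%R.
  by apply: eq_bigr => i /Fk1 ->.
under eq_integral do rewrite E1.
rewrite HT.
rewrite (bigD1 k0)//= Fk10.
have -> : (\prod_(i < n | i != k0) fine (\int[distribution P (Z i)]_x (Fk k.+1 f B i x)%:E))%R = c.
  by apply: eq_bigr => i /Fk1 ->.
rewrite EFinM muleC fineK//.
rewrite ge0_fin_numE ?fint//.
by apply: integral_ge0 => x _; rewrite lee_fin.
Qed.

End product.

Section gauss.
Local Open Scope ereal_scope.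
Context (R : realType).
Local Notation mu := (@lebesgue_measure R).

Lemma pdf01E x : normal_pdf 0 1 x = (normal_peak 1 * expR (- x ^+ 2 / 2))%R :> R.
Proof.
rewrite normal_pdfE ?oner_neq0//= /normal_fun subr0 expr1n.
by [].
Qed.

Lemma lin_gauss (s : R) :
  \int[mu]_x (expR (s * x) * normal_pdf 0 1 x)%:E = (expR (s ^+ 2 / 2))%:E.
Proof.
have E x : (expR (s * x) * normal_pdf 0 1 x = expR (s ^+ 2 / 2) * normal_pdf s 1 x)%R.
  rewrite pdf01E normal_pdfE ?oner_neq0//= /normal_fun expr1n.
  rewrite mulrCA -expRD mulrCA -expRD; congr (_ * expR _)%R.
  by field; rewrite ?pnatr_eq0.
transitivity (\int[mu]_x ((expR (s ^+ 2 / 2))%:E * (normal_pdf s 1 x)%:E)).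
  by apply: eq_integral => x _; rewrite E EFinM.
rewrite ge0_integralZl//; try by [move=> x _; rewrite lee_fin normal_pdf_ge0];
  try by [rewrite lee_fin expR_ge0]; try by [apply/measurable_EFinP; exact: measurable_normal_pdf].
by rewrite integral_normal_pdf mule1.
Qed.

Lemma pk2 (s : R) : (normal_peak s ^+ 2 = (s ^+ 2 * pi *+ 2)^-1)%R.
Proof.
rewrite /normal_peak exprVn sqr_sqrtr//.
by rewrite mulrn_wge0// mulr_ge0 ?sqr_ge0 ?pi_ge0.
Qed.

Lemma sq_gauss (a : R) : (0 < a)%R -> exists m : R,
  [/\ \int[mu]_x (expR ((1 - a) / 2 * x ^+ 2) * normal_pdf 0 1 x)%:E = m%:E,
      (0 <= m)%R & (m ^+ 2 * a = 1)%R].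
Proof.
move=> a0.
pose sg : R := Num.sqrt a^-1.
have sg2 : (sg ^+ 2 = a^-1)%R by rewrite sqr_sqrtr// invr_ge0 ltW.
have sg0 : sg != 0%R.
  by rewrite /sg sqrtr_eq0 -ltNge invr_gt0.
have a0' : a != 0%R by rewrite gt_eqF.
exists (normal_peak 1 / normal_peak sg)%R; split.
- have E x : (expR ((1 - a) / 2 * x ^+ 2) * normal_pdf 0 1 x =
      (normal_peak 1 / normal_peak sg) * normal_pdf 0 sg x)%R.
    rewrite pdf01E normal_pdfE//= /normal_fun subr0 sg2.
    rewrite mulrCA -expRD -[in RHS]mulrA mulKf; last by rewrite gt_eqF// normal_peak_gt0.
    congr (_ * expR _)%R.
    by field; rewrite ?pnatr_eq0 ?a0'.
  transitivity (\int[mu]_x ((normal_peak 1 / normal_peak sg)%:E * (normal_pdf 0 sg x)%:E)).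
    by apply: eq_integral => x _; rewrite E EFinM.
  rewrite ge0_integralZl//; try by [move=> x _; rewrite lee_fin normal_pdf_ge0];
    try by [rewrite lee_fin divr_ge0 ?normal_peak_ge0];
    try by [apply/measurable_EFinP; exact: measurable_normal_pdf].
  by rewrite integral_normal_pdf mule1.
- by rewrite divr_ge0 ?normal_peak_ge0.
- rewrite expr_div_n !pk2 sg2 expr1n mul1r.
  have pi0 : pi != 0%R :> R by rewrite gt_eqF// pi_gt0.
  move: (pi : R) pi0 => p p0. rewrite !mulr2n. field. by rewrite a0' -mulr2n mulrn_eq0 (negbTE p0).
Qed.

End gauss.

Section num.
Context (R : realType).
Implicit Types e S Q L : R.

Lemma L1 e : 0 < e -> e < 1 ->
  1 <= (1 - e / 3) * expR (e / 3 * (1 + e) - 2 * e ^+ 2 / 25).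
Proof.
move=> e0 e1.
set y := e / 3 * (1 + e) - 2 * e ^+ 2 / 25.
have h := expR_ge1Dx y.
have h2 : (1 - e / 3) * (1 + y) <= (1 - e / 3) * expR y.
  by rewrite ler_wpM2l//; lra.
apply: le_trans h2; rewrite /y; nra.
Qed.

Lemma expR_le_inv (x : R) : x < 1 -> expR x <= (1 - x)^-1.
Proof.
move=> x1.
have h := expR_ge1Dx (- x).
rewrite -[expR x]invrK expRN in h *.
rewrite lef_pV2 ?posrE ?subr_gt0// ?invr_gt0 ?expR_gt0//.
Qed.

Lemma L2 e : 0 < e -> e < 1 ->
  expR (3 * e / 8 * (1 - 3 * e / 4) + 2 * e ^+ 2 / 25) <= 1 + 3 * e / 8.
Proof.
move=> e0 e1.
have hx : 3 * e / 8 * (1 - 3 * e / 4) + 2 * e ^+ 2 / 25 < 1 by nra.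
apply: le_trans; first exact: (expR_le_inv _ hx).
rewrite -div1r ler_pdivrMr; [nra|nra].
Qed.

Lemma expR_ge1 (x : R) : 0 <= x -> 1 <= expR x.
Proof. by move=> x0; apply: le_trans (expR_ge1Dx x); lra. Qed.

Lemma pointwise S Q L e : 0 < S -> 0 < e -> e < 1 ->
  e <= `|S^-1 * Q - 1 - (S^-1 * L) ^+ 2| ->
  1 <= expR (e / 6 * Q) * expR (S * - (e / 6 * (1 + e)))
     + expR (- (3 * e / 16) * Q) * expR (S * - (- (3 * e / 16) * (1 - 3 * e / 4)))
     + (expR (Num.sqrt e / 2 * L) + expR (- (Num.sqrt e / 2) * L)) * expR (S * - (e / 4)).
Proof.
move=> S0 e0 e1.
set q := S^-1 * Q; set l := S^-1 * L.
have HQ : Q = S * q by rewrite /q mulrA divff ?mul1r// gt_eqF.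
have HL : L = S * l by rewrite /l mulrA divff ?mul1r// gt_eqF.
rewrite HQ HL.
set C := expR (S * - (e / 4)).
rewrite [(_ + _) * C]mulrDl.
set T1 := expR (e / 6 * _) * _.
set T2 := expR (- (3 * e / 16) * _) * _.
set T3 := expR (Num.sqrt e / 2 * _) * C.
set T4 := expR (- (Num.sqrt e / 2) * _) * C.
have T10 : 0 <= T1 by rewrite mulr_ge0 ?expR_ge0.
have T20 : 0 <= T2 by rewrite mulr_ge0 ?expR_ge0.
have T30 : 0 <= T3 by rewrite mulr_ge0 ?expR_ge0.
have T40 : 0 <= T4 by rewrite mulr_ge0 ?expR_ge0.
rewrite ler_normr => /orP[h|h].
  suff : 1 <= T1 by lra.
  rewrite /T1 -expRD; apply: expR_ge1.
  have hh : 0 <= q - 1 - e by nra.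
  have := mulr_ge0 (ltW S0) (mulr_ge0 (ltW e0) hh); nra.
have [hq|hq] := lerP q (1 - 3 * e / 4).
  suff : 1 <= T2 by lra.
  rewrite /T2 -expRD; apply: expR_ge1.
  have hh : 0 <= 1 - 3 * e / 4 - q by lra.
  have := mulr_ge0 (ltW S0) (mulr_ge0 (ltW e0) hh); nra.
have r0 : 0 < Num.sqrt e by rewrite sqrtr_gt0.
have r2 : Num.sqrt e ^+ 2 = e by rewrite sqr_sqrtr// ltW.
have l2 : Num.sqrt e ^+ 2 / 4 <= l ^+ 2 by lra.
have [l0|l0] := lerP 0 l.
  have hl : Num.sqrt e / 2 <= l by nra.
  suff : 1 <= T3 by lra.
  rewrite /T3 /C -expRD; apply: expR_ge1.
  have hh : 0 <= l - Num.sqrt e / 2 by lra.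
  have := mulr_ge0 (ltW S0) (mulr_ge0 (ltW r0) hh); nra.
have hl : Num.sqrt e / 2 <= - l by nra.
suff : 1 <= T4 by lra.
rewrite /T4 /C -expRD; apply: expR_ge1.
have hh : 0 <= - l - Num.sqrt e / 2 by lra.
have := mulr_ge0 (ltW S0) (mulr_ge0 (ltW r0) hh); nra.
Qed.

End num.

Section num2.
Context (R : realType).
Implicit Types e : R.

Lemma sq_le (x y : R) : 0 <= x -> 0 < y -> x ^+ 2 <= y ^+ 2 -> x <= y.
Proof. move=> x0 y0 h; nra. Qed.

Lemma coord1 e (m : R) : 0 < e -> e < 1 -> 0 <= m -> m ^+ 2 * (1 - e / 3) = 1 ->
  m * expR (- (e / 6 * (1 + e))) <= expR (- e ^+ 2 / 25).
Proof.
move=> e0 e1 m0 hm.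
set E1 := expR (- (e / 6 * (1 + e))); set X := expR (- e ^+ 2 / 25).
set K := expR (e / 3 * (1 + e) - 2 * e ^+ 2 / 25).
have h1 : 1 <= (1 - e / 3) * K := @L1 _ e e0 e1.
have h2 : K * E1 ^+ 2 = X ^+ 2.
  rewrite /K /E1 /X -!expRM_natr -expRD; congr expR.
  by rewrite /=; field; rewrite ?pnatr_eq0.
apply: sq_le; first by rewrite mulr_ge0 ?expR_ge0.
  exact: expR_gt0.
rewrite exprMn -h2.
have -> : K * E1 ^+ 2 = m ^+ 2 * E1 ^+ 2 * ((1 - e / 3) * K).
  transitivity ((m ^+ 2 * (1 - e / 3)) * (K * E1 ^+ 2)); first by rewrite hm mul1r.
  by ring.
rewrite ler_peMr// ?mulr_ge0// ?exprn_ge0// ?expR_ge0//.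
Qed.

Lemma coord2 e (m : R) : 0 < e -> e < 1 -> 0 <= m -> m ^+ 2 * (1 + 3 * e / 8) = 1 ->
  m * expR (- (- (3 * e / 16) * (1 - 3 * e / 4))) <= expR (- e ^+ 2 / 25).
Proof.
move=> e0 e1 m0 hm.
set E2 := expR (- (- (3 * e / 16) * (1 - 3 * e / 4))); set X := expR (- e ^+ 2 / 25).
set K := expR (3 * e / 8 * (1 - 3 * e / 4) + 2 * e ^+ 2 / 25).
have h1 : K <= 1 + 3 * e / 8 := @L2 _ e e0 e1.
have h2 : E2 ^+ 2 = K * X ^+ 2.
  rewrite /K /E2 /X -!expRM_natr -expRD; congr expR.
  by rewrite /=; field; rewrite ?pnatr_eq0.
apply: sq_le; first by rewrite mulr_ge0 ?expR_ge0.
  exact: expR_gt0.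
rewrite exprMn h2.
rewrite -[leRHS]mul1r -hm mulrA ler_wpM2r ?exprn_ge0 ?expR_ge0//.
by rewrite ler_wpM2l// exprn_ge0.
Qed.

Lemma combine (n : nat) e (u1 u2 : R) (p : \bar R) : 0 < e -> e < 1 ->
  u1 <= expR (- e ^+ 2 / 25) ^+ n -> u2 <= expR (- e ^+ 2 / 25) ^+ n ->
  (p <= (u1 + u2 + (expR (- (e / 8)) ^+ n + expR (- (e / 8)) ^+ n))%:E)%E ->
  (p <= 1)%E ->
  (p <= (3 * expR (- (n%:R * e ^+ 2) / 25))%:E)%E.
Proof.
move=> e0 e1; rewrite -!expRM_natl => hu1 hu2 hp hp1.
have -> : - (n%:R * e ^+ 2) / 25 = n%:R * (- e ^+ 2 / 25) by field; rewrite ?pnatr_eq0.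
have n0 : 0 <= n%:R :> R by [].
have [hy|hy] := lerP (n%:R * e ^+ 2 / 25) (1 / 2).
  apply: (le_trans hp1); rewrite lee_fin.
  have := expR_ge1Dx (n%:R * (- e ^+ 2 / 25)); lra.
apply: (le_trans hp); rewrite lee_fin.
suff : 2 * expR (n%:R * - (e / 8)) <= expR (n%:R * (- e ^+ 2 / 25)) by lra.
set a := n%:R * (- e ^+ 2 / 25); set b := n%:R * - (e / 8).
have -> : expR a = expR (a - b) * expR b by rewrite -expRD subrK.
rewrite ler_wpM2r ?expR_ge0//.
have hab : 1 <= a - b.
  rewrite /a /b.
  have e1' : 0 <= 1 - e by lra.
  have := mulr_ge0 n0 (mulr_ge0 (ltW e0) e1'); nra.
have := expR_ge1Dx (a - b); lra.
Qed.

End num2.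

Section main.
Local Open Scope ereal_scope.
Context d (T : measurableType d) (R : realType) (P : probability T R).
Variables (S : nat) (Z : 'I_S -> {RV P >-> R}).
Hypothesis hind : mutually_independent_RVs P Z.
Hypothesis hnorm : forall i, has_normal_law P (Z i) 0 1.

Lemma dist_leb i (g : R -> R) : measurable_fun setT g -> (forall x, (0 <= g x)%R) ->
  \int[distribution P (Z i)]_x (g x)%:E =
  \int[lebesgue_measure]_x (g x * normal_pdf 0 1 x)%:E.
Proof.
move=> mg g0.
have mphi : measurable_fun (T := measurableTypeR R) (U := R) setT (fun x : R => x).
  by move=> _ B mB; rewrite setTI.
have mG : measurable_fun (T := measurableTypeR R) setT (normal_pdf (0:R) 1).
  move=> _ B mB; have := measurable_normal_pdf (0:R) 1 measurableT mB.
  by [].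
have hB : forall B, measurable B ->
    \int[lebesgue_measure]_x (\1_B x * normal_pdf 0 1 x)%:E =
    1%:E * distribution P (Z i) B.
  move=> B mB; rewrite mul1e hnorm// /normal_prob [RHS]integral_mkcond.
  apply: eq_integral => x _; rewrite /patch indicE /=.
  by case: ifP => _; rewrite ?mul1r ?mul0r.
have := @transfer _ _ _ _ R lebesgue_measure (distribution P (Z i)) (fun x : R => x)
  mphi (normal_pdf 0 1) mG (normal_pdf_ge0 0 1) 1%R ler01 hB g mg g0.
by rewrite mul1e => ->.
Qed.

Lemma prodE (g : R -> R) (m : R) : measurable_fun setT g -> (forall x, (0 <= g x)%R) ->
  \int[lebesgue_measure]_x (g x * normal_pdf 0 1 x)%:E = m%:E ->
  \int[P]_w (\prod_i g (Z i w))%:E = (m ^+ S)%:E.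
Proof.
move=> mg g0 hm.
have := @claim d T R P S Z hind S (fun _ => g) (fun _ => mg) (fun _ => g0) _ (fun _ => set0)
  (fun _ => measurable0).
have -> : @Fk R S S (fun _ => g) (fun _ => set0) = fun _ => g.
  by apply/funext => i; rewrite /Fk ltn_ord.
move=> ->.
- congr EFin.
  under eq_bigr do rewrite dist_leb// hm /=.
  by rewrite prodr_const card_ord.
- by move=> i; rewrite dist_leb// hm ltry.
Qed.

Lemma int_add (f1 f2 : T -> R) : measurable_fun setT f1 -> measurable_fun setT f2 ->
  (forall w, (0 <= f1 w)%R) -> (forall w, (0 <= f2 w)%R) ->
  \int[P]_w (f1 w + f2 w)%:E = \int[P]_w (f1 w)%:E + \int[P]_w (f2 w)%:E.
Proof.
move=> m1 m2 p1 p2.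
under eq_integral do rewrite EFinD.
rewrite ge0_integralD//; try by [move=> w _; rewrite lee_fin]; exact/measurable_EFinP.
Qed.

Lemma int_scale (f : T -> R) (c : R) : measurable_fun setT f ->
  (forall w, (0 <= f w)%R) -> (0 <= c)%R ->
  \int[P]_w (f w * c)%:E = \int[P]_w (f w)%:E * c%:E.
Proof.
move=> mf p c0.
under eq_integral do rewrite EFinM.
rewrite ge0_integralZr//; try by [move=> w _; rewrite lee_fin]; try by [rewrite lee_fin];
  exact/measurable_EFinP.
Qed.

Lemma mprod (g : R -> R) : measurable_fun setT g ->
  measurable_fun setT (fun w => \prod_(i < S) g (Z i w))%R.
Proof.
move=> mg; apply: measurable_prod => i _.
by apply: measurableT_comp.
Qed.

Lemma main_bound (hS : (0 < S)%N) (eps : R) (e0 : (0 < eps)%R) (e1 : (eps < 1)%R) :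
  (P [set w | (eps <= `| S%:R^-1 * (\sum_(s < S) Z s w ^+ 2) - 1
                        - (S%:R^-1 * (\sum_(s < S) Z s w)) ^+ 2 |)%R]
   <= (3 * expR (- (S%:R * eps ^+ 2) / 25))%:E)%E.
Proof.
have Sn0 : (0 < S%:R :> R)%R by rewrite ltr0n.
pose Q w := (\sum_(s < S) Z s w ^+ 2)%R.
pose L w := (\sum_(s < S) Z s w)%R.
pose Dn w := `| S%:R^-1 * Q w - 1 - (S%:R^-1 * L w) ^+ 2 |%R.
have mQ : measurable_fun setT Q.
  by apply: measurable_sum => i; apply: measurable_funX.
have mL : measurable_fun setT L.
  by apply: measurable_sum => i.
have mDn : measurable_fun setT Dn.
  apply: measurableT_comp => //; apply: measurable_funB.
    apply: measurable_funB => //; apply: measurable_funM => //.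
  by apply: measurable_funX; apply: measurable_funM.
set E := [set w | _].
have mE : measurable E.
  have := @measurable_fun_le _ _ _ setT (cst eps) Dn measurableT (measurable_cst _) mDn.
  by rewrite setTI.
pose a1 : R := (1 - eps / 3)%R.
pose a2 : R := (1 + 3 * eps / 8)%R.
have a10 : (0 < a1)%R by rewrite /a1; lra.
have a20 : (0 < a2)%R by rewrite /a2; lra.
have [m1 [Hm1 m10 m1a]] := @sq_gauss R a1 a10.
have [m2 [Hm2 m20 m2a]] := @sq_gauss R a2 a20.
pose s3 : R := (Num.sqrt eps / 2)%R.
pose g1 x := expR ((1 - a1) / 2 * x ^+ 2).
pose g2 x := expR ((1 - a2) / 2 * x ^+ 2).
pose g3 x := expR (s3 * x).
pose g4 x := expR (- s3 * x).
have mg1 : measurable_fun setT g1.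
  by apply: measurableT_comp => //; apply: measurable_funM => //; apply: measurable_funX.
have mg2 : measurable_fun setT g2.
  by apply: measurableT_comp => //; apply: measurable_funM => //; apply: measurable_funX.
have mg3 : measurable_fun setT g3.
  by apply: measurableT_comp => //; apply: measurable_funM.
have mg4 : measurable_fun setT g4.
  by apply: measurableT_comp => //; apply: measurable_funM.
have I1 := @prodE g1 m1 mg1 (fun x => expR_ge0 _) Hm1.
have I2 := @prodE g2 m2 mg2 (fun x => expR_ge0 _) Hm2.
have I3 := @prodE g3 _ mg3 (fun x => expR_ge0 _) (@lin_gauss R s3).
have I4 := @prodE g4 _ mg4 (fun x => expR_ge0 _) (@lin_gauss R (- s3)).
have P1 w : (\prod_(i < S) g1 (Z i w) = expR (eps / 6 * Q w))%R.
  rewrite /g1 -expR_sum; congr expR; rewrite /Q mulr_sumr; apply: eq_bigr => i _.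
  by congr (_ * _)%R; rewrite /a1; field.
have P2 w : (\prod_(i < S) g2 (Z i w) = expR (- (3 * eps / 16) * Q w))%R.
  rewrite /g2 -expR_sum; congr expR; rewrite /Q mulr_sumr; apply: eq_bigr => i _.
  by congr (_ * _)%R; rewrite /a2; field.
have P3 w : (\prod_(i < S) g3 (Z i w) = expR (Num.sqrt eps / 2 * L w))%R.
  rewrite /g3 -expR_sum; congr expR; rewrite /L mulr_sumr; apply: eq_bigr => i _.
  by [].
have P4 w : (\prod_(i < S) g4 (Z i w) = expR (- (Num.sqrt eps / 2) * L w))%R.
  rewrite /g4 -expR_sum; congr expR; rewrite /L mulr_sumr; apply: eq_bigr => i _.
  by [].
pose c1 : R := expR (S%:R * - (eps / 6 * (1 + eps))).
pose c2 : R := expR (S%:R * - (- (3 * eps / 16) * (1 - 3 * eps / 4))).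
pose C : R := expR (S%:R * - (eps / 4)).
pose G1 w := (\prod_(i < S) g1 (Z i w))%R.
pose G2 w := (\prod_(i < S) g2 (Z i w))%R.
pose G3 w := (\prod_(i < S) g3 (Z i w))%R.
pose G4 w := (\prod_(i < S) g4 (Z i w))%R.
have G10 w : (0 <= G1 w)%R by apply: prodr_ge0 => i _; exact: expR_ge0.
have G20 w : (0 <= G2 w)%R by apply: prodr_ge0 => i _; exact: expR_ge0.
have G30 w : (0 <= G3 w)%R by apply: prodr_ge0 => i _; exact: expR_ge0.
have G40 w : (0 <= G4 w)%R by apply: prodr_ge0 => i _; exact: expR_ge0.
have mG1 : measurable_fun setT G1 := @mprod _ mg1.
have mG2 : measurable_fun setT G2 := @mprod _ mg2.
have mG3 : measurable_fun setT G3 := @mprod _ mg3.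
have mG4 : measurable_fun setT G4 := @mprod _ mg4.
pose h w := (G1 w * c1 + G2 w * c2 + (G3 w * C + G4 w * C))%R.
have hpt w : (\1_E w <= h w)%R.
  rewrite indicE; case: (boolP (w \in E)) => [/set_mem hw|_].
    rewrite /h -mulrDl /G1 /G2 /G3 /G4 P1 P2 P3 P4.
    exact: (@pointwise R S%:R (Q w) (L w) eps Sn0 e0 e1 hw).
  rewrite /h; apply: addr_ge0; first apply: addr_ge0.
  - by rewrite mulr_ge0 ?expR_ge0.
  - by rewrite mulr_ge0 ?expR_ge0.
  - by rewrite addr_ge0// mulr_ge0 ?expR_ge0.
have i0 w : (0 <= \1_E w :> R)%R.
  by rewrite indicE; case: (boolP (w \in E)) => _; rewrite ?ler01 ?lexx.
have PE : P E = \int[P]_w (\1_E w)%:E by rewrite integral_indic// setIT.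
have c10 : (0 <= c1)%R := expR_ge0 _.
have c20 : (0 <= c2)%R := expR_ge0 _.
have C0 : (0 <= C)%R := expR_ge0 _.
have mh : measurable_fun setT h.
  apply: measurable_funD; apply: measurable_funD => //; apply: measurable_funM => //.
have Hle : P E <= \int[P]_w (h w)%:E.
  rewrite PE; apply: ge0_le_integral => //.
  - by apply/measurable_EFinP; exact: measurable_indic.
  - by apply/measurable_EFinP.
  - by move=> w _; rewrite lee_fin hpt.
have Hint : \int[P]_w (h w)%:E = ((m1 ^+ S * c1 + m2 ^+ S * c2) +
    (expR (s3 ^+ 2 / 2) ^+ S * C + expR ((- s3) ^+ 2 / 2) ^+ S * C))%:E.
  rewrite /h int_add//; last 4 first.
  - by apply: measurable_funD => //; apply: measurable_funM.
  - by apply: measurable_funD => //; apply: measurable_funM.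
  - by move=> w; rewrite addr_ge0// mulr_ge0.
  - by move=> w; rewrite addr_ge0// mulr_ge0.
  rewrite int_add//; last 4 first.
  - by apply: measurable_funM.
  - by apply: measurable_funM.
  - by move=> w; rewrite mulr_ge0.
  - by move=> w; rewrite mulr_ge0.
  rewrite int_add//; last 4 first.
  - by apply: measurable_funM.
  - by apply: measurable_funM.
  - by move=> w; rewrite mulr_ge0.
  - by move=> w; rewrite mulr_ge0.
  rewrite !int_scale//.
  by rewrite I1 I2 I3 I4 -!EFinM -!EFinD.
have s32 : (s3 ^+ 2 = eps / 4)%R.
  by rewrite /s3 expr_div_n sqr_sqrtr ?(ltW e0)//; field.
have V1 : (expR (s3 ^+ 2 / 2) ^+ S * C = expR (- (eps / 8)) ^+ S)%R.
  rewrite /C expRM_natl -exprMn -expRD; congr (expR _ ^+ _)%R.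
  by rewrite s32; field.
have V2 : (expR ((- s3) ^+ 2 / 2) ^+ S * C = expR (- (eps / 8)) ^+ S)%R.
  by rewrite sqrrN.
rewrite Hint V1 V2 in Hle.
have hu1 : (m1 ^+ S * c1 <= expR (- eps ^+ 2 / 25) ^+ S)%R.
  rewrite /c1 expRM_natl -exprMn; apply: lerXn2r.
  - by rewrite nnegrE mulr_ge0 ?expR_ge0.
  - by rewrite nnegrE expR_ge0.
  - exact: (@coord1 R eps m1 e0 e1 m10 m1a).
have hu2 : (m2 ^+ S * c2 <= expR (- eps ^+ 2 / 25) ^+ S)%R.
  rewrite /c2 expRM_natl -exprMn; apply: lerXn2r.
  - by rewrite nnegrE mulr_ge0 ?expR_ge0.
  - by rewrite nnegrE expR_ge0.
  - exact: (@coord2 R eps m2 e0 e1 m20 m2a).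
exact: (@combine R S eps _ _ (P E) e0 e1 hu1 hu2 Hle (probability_le1 _ mE)).
Qed.

End main.

Theorem lemma6 (d : measure_display) (T : measurableType d) (R : realType)
  (P : probability T R) (S : nat) (Z : 'I_S -> {RV P >-> R})
  (hS : (0 < S)%N)
  (hind : mutually_independent_RVs P Z)
  (hnorm : forall i, has_normal_law P (Z i) 0 1)
  (eps : R) (heps0 : 0 < eps) (heps1 : eps < 1) :
  (P [set w | (eps <= `| S%:R^-1 * (\sum_(s < S) Z s w ^+ 2) - 1
                        - (S%:R^-1 * (\sum_(s < S) Z s w)) ^+ 2 |)%R]
   <= (3 * expR (- (S%:R * eps ^+ 2) / 25))%:E)%E.
Proof.
exact: (@main_bound d T R P S Z hind hnorm hS eps heps0 heps1).
Qed.
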